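(* Let $k>4$ be even and let $f:\mathbb{Z}_k\to\mathbb{Z}_k$. If there is some $y\in\mathbb{Z}_k$ such that the equation $f(x)=y$ has more than $k/2$ solutions $x\in\mathbb{Z}_k$, then $f$ is not semi-planar.
   Context: $\mathbb{Z}_k$ denotes the additive cyclic group of integers modulo $k$. A function $f:\mathbb{Z}_k\to\mathbb{Z}_k$ is semi-planar if for every non-zero $a\in\mathbb{Z}_k$ and every $y\in\mathbb{Z}_k$, the equation $f(x+a)-f(x)=y$ has either $0$ or $2$ solutions $x\in\mathbb{Z}_k$. *)

(* Defs.v *)
From mathcomp Require Import all_boot all_algebra.
Set Implicit Arguments. Unset Strict Implicit. Unset Printing Implicit Defensive.
Import GRing.Theory.
Local Open Scope ring_scope.

(* Semi-planar functions on Z_k (here 'Z_k, used only for k >= 2). *)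
Definition semi_planar (k : nat) (f : 'Z_k -> 'Z_k) : Prop :=
  forall a y : 'Z_k, a != 0 ->
    let n := #|[set x : 'Z_k | f (x + a) - f x == y]| in
    (n = 0)%N \/ (n = 2)%N.

(* Main.v *)
Require Import Defs.
From mathcomp Require Import all_boot all_algebra.
From mathcomp Require Import zify.
Import GRing.Theory.
Local Open Scope ring_scope.

Theorem lemma7 (k : nat) (f : 'Z_k -> 'Z_k) :
  (4 < k)%N -> ~~ odd k ->
  (exists y : 'Z_k, (k./2 < #|[set x : 'Z_k | f x == y]|)%N) ->
  ~ semi_planar f.
Proof.
move=> k4 ek [y Hy] sp.
set S := [set x : 'Z_k | f x == y] in Hy.
have cardT : #|'Z_k| = k by rewrite card_ord Zp_cast //; lia.
have le2 : forall a : 'Z_k, a != 0 -> (#|[set x : 'Z_k in S | (x + a)%R \in S]| <= 2)%N.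
  move=> a a0.
  have sub : [set x : 'Z_k in S | (x + a)%R \in S] \subset [set x : 'Z_k | f (x + a) - f x == 0].
    apply/subsetP => x; rewrite !inE => /andP[/eqP h1 /eqP h2].
    by rewrite h1 h2 subrr.
  have := subset_leq_card sub.
  move=> h; have := sp a 0 a0; rewrite /= => -[e|e]; rewrite e in h; exact: (leq_trans h).
have inner : forall x : 'Z_k, x \in S ->
    #|[set a : 'Z_k | (a != 0) && ((x + a)%R \in S)]| = (#|S| - 1)%N.
  move=> x xS.
  have -> : [set a : 'Z_k | (a != 0) && ((x + a)%R \in S)] = (fun z => z - x) @: (S :\ x).
    apply/setP => b; rewrite inE; apply/andP/imsetP.
    - move=> [a0 xa]; exists (x + b); last by rewrite addrC addKr.
      by rewrite in_setD1 xa andbT -subr_eq0 addrAC subrr add0r.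
    - move=> [z]; rewrite in_setD1 => /andP[zx zS] ->; split.
        by rewrite subr_eq0.
      by rewrite addrC subrK.
  rewrite card_imset; last exact: addIr.
  move: (cardsD1 x S); rewrite xS add1n => ->; by rewrite subn1.
have total : \sum_(a : 'Z_k | a != 0) #|[set x : 'Z_k in S | (x + a)%R \in S]| = (#|S| * (#|S| - 1))%N.
  have e1 : forall a : 'Z_k, #|[set x : 'Z_k in S | (x + a)%R \in S]| = \sum_(x in S) ((x + a)%R \in S : nat).
    move=> a; rewrite -sum1_card big_mkcond /= [RHS]big_mkcond /=.
    apply: eq_bigr => x _; rewrite !inE.
    by case: (f x == y); case: (f (x + a) == y).
  rewrite (eq_bigr _ (fun a _ => e1 a)).
  rewrite exchange_big /=.
  rewrite (eq_bigr (fun _ => (#|S| - 1)%N)); first by rewrite sum_nat_const.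
  move=> x xS; rewrite -(inner x xS) -sum1_card big_mkcond /= [RHS]big_mkcond /=.
  apply: eq_bigr => a _; rewrite !inE; by case: (a != 0); case: ((x + a)%R \in S).
have bound : (\sum_(a : 'Z_k | a != 0%R) #|[set x : 'Z_k in S | (x + a)%R \in S]| <= \sum_(a : 'Z_k | a != 0%R) 2)%N.
  by apply: leq_sum => a a0; apply: le2.
rewrite total sum_nat_const in bound.
have hc : #|(fun i : 'Z_k => i != 0%R)| = (k - 1)%N.
  have -> : #|(fun i : 'Z_k => i != 0%R)| = #|predC1 (0 : 'Z_k)| by apply: eq_card.
  by rewrite cardC1 cardT subn1.
rewrite hc in bound.
have kk := odd_double_half k.
rewrite (negbTE ek) /= add0n in kk.
move: Hy bound kk k4; set s := #|S|; set m := k./2 => Hy bound kk k4.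
rewrite -kk in k4 bound; rewrite -muln2 in k4 bound.
nia.
Qed.
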